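(* Let $P$ be a hereditary property, let $(G,f)\in\mathcal C$ with $P(G,f)$, and let $W\subseteq V(G)$ be finite. Then there exists a finite $f$-factor $F$ of $G$ such that $P(G-F,\,f-d_F)$ holds, $d_F(x)=f(x)$ for every $x\in W$ with $f(x)<\aleph_0$, and $d_F(x)>0$ for every $x\in W$ with $f(x)\ge\aleph_0$.
   Context: A graph is $G=(V,E)$ with $V$ a nonempty set and $E\subseteq\{e\subseteq V:|e|=2\}$. For $F\subseteq E$ and $x\in V$, $d_F(x)$ is the cardinal $|\{e\in F:x\in e\}|$. For a function $f:V\to$ Cardinals, an $f$-factor of $G$ is a set $F\subseteq E$ with $d_F(x)\le f(x)$ for all $x\in V$; it is perfect if $d_F(x)=f(x)$ for all $x\in V$. $\mathcal C$ is the class of all pairs $(G,f)$ with $G=(V,E)$ a graph, $f:V\to$ Cardinals, and $f(x)\le d_E(x)$ for all $x\in V$. A property $P$ is a class of pairs; $P(G,f)$ means that $(G,f)\in\mathcal C$ and $(G,f)$ has property $P$. For $H\subseteq E$, $G-H=(V,E\setminus H)$; for $x,y\in V$, $G-\{x,y\}$ denotes $(V,E\setminus\{\{x,y\}\})$ (removal of the single edge $\{x,y\}$). For $x,y\in V$, $f_{x,y}(v)=f(v)-1$ if $v\in\{x,y\}$ and $1\le f(v)<\aleph_0$, and $f_{x,y}(v)=f(v)$ otherwise. $P$ is hereditary if for every $(G,f)$ with $P(G,f)$ and every $x\in V(G)$ with $f(x)>0$ there is $y\in V(G)$ with $f(y)>0$, $\{x,y\}\in E(G)$ and $P(G-\{x,y\},f_{x,y})$.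 For a finite $F\subseteq E$ with $d_F\le f$, $f-d_F$ is the function $x\mapsto f(x)-d_F(x)$ if $f(x)<\aleph_0$ and $x\mapsto f(x)$ if $f(x)\ge\aleph_0$. *)

(* Defs.v *)
From Stdlib Require Import List Arith ClassicalEpsilon.
Import ListNotations.

(** Cardinals: a finite cardinal is a natural number [cfin n]; an infinite
    cardinal is represented by a type [cinf T] (standing for |T|, which is
    required to be >= aleph_0 wherever it matters, see [inC]).  Two
    representations denote the same cardinal iff [ceq] holds. *)
Inductive card : Type :=
  | cfin : nat -> card
  | cinf : Type -> card.

Definition injectiveF {A B : Type} (g : A -> B) : Prop :=
  forall a a', g a = g a' -> a = a'.
Definition bijectiveF {A B : Type} (g : A -> B) : Prop :=
  injectiveF g /\ forall b, exists a, g a = b.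

Definition infiniteT (T : Type) : Prop := exists g : nat -> T, injectiveF g.

Definition ceq (c d : card) : Prop :=
  match c, d with
  | cfin n, cfin m => n = m
  | cinf T, cinf U => exists g : T -> U, bijectiveF g
  | _, _ => False
  end.

Definition cpos (c : card) : Prop :=
  match c with cfin n => 0 < n | cinf _ => True end.

Definition is_graph (V : Type) (E : V -> V -> Prop) : Prop :=
  inhabited V /\ (forall x y, E x y -> E y x) /\ (forall x, ~ E x x).

Definition le_deg {V : Type} (E : V -> V -> Prop) (x : V) (c : card) : Prop :=
  match c with
  | cfin n => exists g : {i : nat | i < n} -> {y : V | E x y}, injectiveF g
  | cinf T => infiniteT T /\ exists g : T -> {y : V | E x y}, injectiveF g
  end.

Definition inC (V : Type) (E : V -> V -> Prop) (f : V -> card) : Prop :=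
  is_graph V E /\ forall x, le_deg E x (f x).

Definition property := forall V : Type, (V -> V -> Prop) -> (V -> card) -> Prop.

Definition holdsP (P : property) (V : Type) (E : V -> V -> Prop) (f : V -> card) : Prop :=
  inC V E f /\ P V E f.

(** P is a class of pairs (G,f) with f valued in cardinals: it may only
    depend on the cardinals denoted, not on their representation. *)
Definition rep_invariant (P : property) : Prop :=
  forall V E (f g : V -> card), (forall v, ceq (f v) (g v)) -> P V E f -> P V E g.

Definition remove_edge {V : Type} (E : V -> V -> Prop) (x y : V) : V -> V -> Prop :=
  fun u v => E u v /\ ~ ((u = x /\ v = y) \/ (u = y /\ v = x)).

Definition remove_edges {V : Type} (E H : V -> V -> Prop) : V -> V -> Prop :=
  fun u v => E u v /\ ~ H u v.

Definition cdec (c : card) : card :=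
  match c with cfin n => cfin (Nat.pred n) | cinf T => cinf T end.

Definition fdec {V : Type} (f : V -> card) (x y : V) : V -> card :=
  fun v => if excluded_middle_informative (v = x \/ v = y) then cdec (f v) else f v.

Definition hereditary (P : property) : Prop :=
  forall V E f, holdsP P V E f ->
  forall x, cpos (f x) ->
  exists y, cpos (f y) /\ E x y /\ holdsP P V (remove_edge E x y) (fdec f x y).

Definition csub (c : card) (d : nat) : card :=
  match c with cfin n => cfin (n - d) | cinf T => cinf T end.

Definition nat_le_card (d : nat) (c : card) : Prop :=
  match c with cfin n => d <= n | cinf _ => True end.

Definition finite_edges {V : Type} (F : V -> V -> Prop) : Prop :=
  exists s : list (V * V), forall u v, F u v -> In (u, v) s.

(** d_F(x) = n  (F symmetric, irreflexive: edges at x <-> neighbours of x) *)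
Definition degree_is {V : Type} (F : V -> V -> Prop) (x : V) (n : nat) : Prop :=
  exists l : list V, NoDup l /\ length l = n /\ forall y, F x y <-> In y l.

(* Main.v *)
Require Import Defs.
From Stdlib Require Import List Arith Lia FunctionalExtensionality PropExtensionality ClassicalEpsilon.
Import ListNotations.

Section S.
Variable P : property.
Variable V : Type.
Variable E : V -> V -> Prop.
Variable f : V -> card.

Definition Inv (F : V -> V -> Prop) (d : V -> nat) : Prop :=
    (forall u v, F u v -> E u v) /\ (forall u v, F u v -> F v u) /\
    finite_edges F /\
    (forall x, degree_is F x (d x)) /\
    (forall x, nat_le_card (d x) (f x)) /\
    holdsP P V (remove_edges E F) (fun x => csub (f x) (d x)).

Lemma step F d : Inv F d -> hereditary P -> forall x, cpos (csub (f x) (d x)) ->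
  exists F' d', Inv F' d' /\ (forall v, d v <= d' v) /\ d' x = S (d x).
Proof.
  intros [HFE [HFs [[s Hs] [Hdeg [Hle HP]]]]] Hher x Hpos.
  destruct (Hher _ _ _ HP x Hpos) as [y [Hposy [Exy HP']]].
  assert (Hirr : forall z, ~ remove_edges E F z z) by (apply (proj2 (proj2 (proj1 (proj1 HP))))).
  assert (xy : x <> y) by (intro; subst; eapply Hirr; eauto).
  destruct Exy as [Exy nFxy].
  set (F' := fun u v => F u v \/ ((u = x /\ v = y) \/ (u = y /\ v = x))).
  set (d' := fun v => if excluded_middle_informative (v = x \/ v = y) then S (d v) else d v).
  exists F', d'. split; [|split].
  - unfold Inv. split; [|split; [|split; [|split; [|split]]]].
    + intros u v [H|[[-> ->]|[-> ->]]]; auto.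
      exact (proj1 ((proj1 (proj2 (proj1 (proj1 HP)))) x y (conj Exy nFxy))).
    + intros u v [H|[[-> ->]|[-> ->]]]; unfold F'; auto.
    + exists ((x,y)::(y,x)::s). intros u v [H|[[-> ->]|[-> ->]]]; simpl; auto.
    + intro v. unfold d'. destruct (Hdeg v) as [l [nd [len Hl]]].
      destruct (excluded_middle_informative (v = x \/ v = y)) as [[->| ->]|nv].
      * exists (y :: l). split; [constructor; auto; intro H; apply nFxy; apply (proj2 (Hl y)); exact H|].
        split; [simpl; lia|]. intro z. unfold F'. simpl. rewrite <- Hl.
        split; [intros [H|[[_ H]|[H _]]]; auto; subst; tauto|].
        intros [H|H]; subst; auto.
      * exists (x :: l). split; [constructor; auto; intro H; apply nFxy; apply HFs; apply (proj2 (Hl x)); exact H|].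
        split; [simpl; lia|]. intro z. unfold F'. simpl. rewrite <- Hl.
        split; [intros [H|[[H1 H]|[H1 H]]]; auto; subst; tauto|].
        intros [H|H]; subst; auto.
      * exists l. split; auto. split; auto. intro z. unfold F'. rewrite <- Hl.
        split; [intros [H|[[H _]|[H _]]]; auto; subst; tauto | auto].
    + intro v. unfold d'. destruct (excluded_middle_informative (v = x \/ v = y)) as [[->| ->]|nv]; auto.
      * generalize (Hle x) Hpos. destruct (f x); simpl; auto; lia.
      * generalize (Hle y) Hposy. destruct (f y); simpl; auto; lia.
    + assert (EQ1 : remove_edge (remove_edges E F) x y = remove_edges E F').
      { apply functional_extensionality; intro u; apply functional_extensionality; intro v.
        apply propositional_extensionality. unfold remove_edge, remove_edges, F'. tauto. }
      assert (EQ2 : fdec (fun x => csub (f x) (d x)) x y = (fun v => csub (f v) (d' v))).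
      { apply functional_extensionality; intro v. unfold fdec, d'.
        destruct (excluded_middle_informative (v = x \/ v = y)); auto.
        destruct (f v); simpl; auto. f_equal; lia. }
      rewrite <- EQ1, <- EQ2. exact HP'.
  - intro v; unfold d'; destruct (excluded_middle_informative _); lia.
  - unfold d'; destruct (excluded_middle_informative _); tauto.
Qed.

Lemma vert F d : Inv F d -> hereditary P -> forall x,
  exists F' d', Inv F' d' /\ (forall v, d v <= d' v) /\
   (forall n, f x = cfin n -> d' x = n) /\ (forall T, f x = cinf T -> 0 < d' x).
Proof.
  intros HI Hh x. destruct (f x) as [n|T] eqn:Hfx.
  - remember (n - d x) as k eqn:Hk. revert F d HI Hk. induction k as [|k IH]; intros F d HI Hk.
    + exists F, d. split; auto. split; auto. split; [|discriminate].
      intros m Hm; injection Hm as <-. pose proof (proj1 (proj2 (proj2 (proj2 (proj2 HI)))) x) as Hl.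
      rewrite Hfx in Hl; simpl in Hl. lia.
    + destruct (step F d HI Hh x) as [F1 [d1 [HI1 [Hm1 Hx1]]]].
      { rewrite Hfx; simpl; lia. }
      destruct (IH F1 d1 HI1) as [F2 [d2 [HI2 [Hm2 [H2 H3]]]]]; [lia|].
      exists F2, d2. split; auto. split; auto. intro v; specialize (Hm1 v); specialize (Hm2 v); lia.
  - destruct (step F d HI Hh x) as [F1 [d1 [HI1 [Hm1 Hx1]]]].
    { rewrite Hfx; simpl; auto. }
    exists F1, d1. split; auto. split; auto. split; [discriminate|]. intros; lia.
Qed.

Lemma listW F d : Inv F d -> hereditary P -> forall W : list V,
  exists F' d', Inv F' d' /\
    (forall x, In x W -> forall n, f x = cfin n -> d' x = n) /\
    (forall x, In x W -> forall T, f x = cinf T -> 0 < d' x).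
Proof.
  intros HI Hh W. induction W as [|x W IH].
  - exists F, d. split; auto. split; intros _ [].
  - destruct IH as [F1 [d1 [HI1 [A B]]]].
    destruct (vert F1 d1 HI1 Hh x) as [F2 [d2 [HI2 [Hm [C D]]]]].
    exists F2, d2. split; auto. split.
    + intros z [<-|Hz] n Hn; auto. specialize (A z Hz n Hn). specialize (Hm z).
      pose proof (proj1 (proj2 (proj2 (proj2 (proj2 HI2)))) z) as Hl.
      rewrite Hn in Hl; simpl in Hl. lia.
    + intros z [<-|Hz] T HT; eauto. specialize (B z Hz T HT). specialize (Hm z). lia.
Qed.
End S.

Theorem mainTheorem1 :
  forall (P : property), rep_invariant P -> hereditary P ->
  forall (V : Type) (E : V -> V -> Prop) (f : V -> card),
  holdsP P V E f ->
  forall W : list V,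
  exists (F : V -> V -> Prop) (d : V -> nat),
    (* F is a finite set of edges of G *)
    (forall u v, F u v -> E u v) /\ (forall u v, F u v -> F v u) /\
    finite_edges F /\
    (* d = d_F *)
    (forall x, degree_is F x (d x)) /\
    (* F is an f-factor *)
    (forall x, nat_le_card (d x) (f x)) /\
    holdsP P V (remove_edges E F) (fun x => csub (f x) (d x)) /\
    (forall x, In x W -> forall n, f x = cfin n -> d x = n) /\
    (forall x, In x W -> forall T, f x = cinf T -> 0 < d x).
Proof.
  intros P _ Hh V E f HP W.
  assert (HI : Inv P V E f (fun _ _ => False) (fun _ => 0)).
  { unfold Inv. split; [tauto|split; [tauto|split; [|split; [|split]]]].
    - exists []. tauto.
    - intro x. exists []. simpl. split; [constructor|split; tauto].
    - intro x. destruct (f x); simpl; auto; lia.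
    - assert (EQ1 : remove_edges E (fun _ _ => False) = E).
      { apply functional_extensionality; intro u; apply functional_extensionality; intro v.
        apply propositional_extensionality. unfold remove_edges. tauto. }
      assert (EQ2 : (fun x => csub (f x) 0) = f).
      { apply functional_extensionality; intro v. destruct (f v); simpl; auto. f_equal; lia. }
      rewrite EQ1, EQ2. exact HP. }
  destruct (listW P V E f _ _ HI Hh W) as [F [d [[H1 [H2 [H3 [H4 [H5 H6]]]]] [A B]]]].
  exists F, d. tauto.
Qed.
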